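(* Let $G_1,G_2$ be disjoint graphs, $u\in V(G_1)$, $w\in V(G_2)$, $H=G_1uwG_2$, and $\Delta\nu:=\nu(H)-\nu(G_1)-\nu(G_2)$. For any pattern $\mathbf{s}$ on $H$ with $N(H)\mathbf{s}=\mathbf{1}$, let $\mathbf{s}_1,\mathbf{s}_2$ be its restrictions to $V(G_1)$, $V(G_2)$. Then, according to $(\mathcal{A}_{G_1}(u),\mathcal{A}_{G_2}(w))$: (i) $(0,0)$: $\mathcal{A}_H(u)=0$, $\mathcal{A}_H(w)=0$, $\Delta\nu=0$, and every such $\mathbf{s}$ has $N(G_1)\mathbf{s}_1=\mathbf{1}$, $N(G_2)\mathbf{s}_2=\mathbf{1}$. (ii) $(0,1)$: $\mathcal{A}_H(u)=0$, $\mathcal{A}_H(w)=1$, $\Delta\nu=0$, and every such $\mathbf{s}$ has $N(G_1)\mathbf{s}_1=\overline{\mathbf{c}_u}$, $N(G_2)\mathbf{s}_2=\mathbf{1}$. (iii) $(0,-1)$: $\mathcal{A}_H(u)=0$, $\mathcal{A}_H(w)=-1$, $\Delta\nu=0$; every such $\mathbf{s}$ has $N(G_2)\mathbf{s}_2=\mathbf{1}$, and $N(G_1)\mathbf{s}_1=\mathbf{1}$ if $\mathbf{s}(w)=0$, $N(G_1)\mathbf{s}_1=\overline{\mathbf{c}_u}$ if $\mathbf{s}(w)=1$. (iv) $(1,1)$: $\mathcal{A}_H(u)=-1$, $\mathcal{A}_H(w)=-1$, $\Delta\nu=1$; for every such $\mathbf{s}$, either $\mathbf{s}(u)=0,\mathbf{s}(w)=1$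 and $N(G_1)\mathbf{s}_1=\overline{\mathbf{c}_u}$, $N(G_2)\mathbf{s}_2=\mathbf{1}$, or $\mathbf{s}(u)=1,\mathbf{s}(w)=0$ and $N(G_1)\mathbf{s}_1=\mathbf{1}$, $N(G_2)\mathbf{s}_2=\overline{\mathbf{c}_w}$. (v) $(1,-1)$: $\mathcal{A}_H(u)=0$, $\mathcal{A}_H(w)=1$, $\Delta\nu=-1$, and every such $\mathbf{s}$ has $N(G_1)\mathbf{s}_1=\overline{\mathbf{c}_u}$, $N(G_2)\mathbf{s}_2=\mathbf{1}$. (vi) $(-1,-1)$: $\mathcal{A}_H(u)=0$, $\mathcal{A}_H(w)=0$, $\Delta\nu=-2$, and every such $\mathbf{s}$ has $N(G_1)\mathbf{s}_1=\mathbf{1}$, $N(G_2)\mathbf{s}_2=\mathbf{1}$. The remaining cases $(1,0)$, $(-1,0)$, $(-1,1)$ are obtained from (ii), (iii), (v) by interchanging the roles of $(G_1,u)$ and $(G_2,w)$. In compact form: $\Delta\nu=-2$ if $\mathcal{A}_{G_1}(u)=\mathcal{A}_{G_2}(w)=-1$ and $\Delta\nu=\mathcal{A}_{G_1}(u)\mathcal{A}_{G_2}(w)$ otherwise; and $\mathcal{A}_H(u)\equiv\mathcal{A}_{G_1}(u)(1+\mathcal{A}_{G_2}(w)) \pmod 3$, $\mathcal{A}_H(w)\equiv\mathcal{A}_{G_2}(w)(1+\mathcal{A}_{G_1}(u)) \pmod 3$ (with activation numbers in $\{-1,0,1\}$).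
   Context: For a finite simple graph $G$ with vertex set $\{v_1,\dots,v_n\}$, the closed adjacency matrix $N(G)$ is the $n\times n$ matrix over $\mathbb{Z}_2$ whose $(i,j)$ entry is $1$ iff $i=j$ or $v_i$ is adjacent to $v_j$. Vectors in $\mathbb{Z}_2^{V(G)}$ are patterns/configurations; $\mathbf{p}$ solves $\mathbf{c}$ if $N(G)\mathbf{p}=\mathbf{c}$. The nullity is $\nu(G):=\dim\operatorname{Ker}(N(G))$; elements of the kernel are null patterns. $\mathbf{1}$ denotes the all-ones configuration (of whichever graph is meant); it is solvable on every graph. For a vertex $u$, $\mathbf{c}_u$ is the configuration with $\mathbf{c}_u(v)=1$ iff $v=u$, and $\overline{\mathbf{c}_u}:=\mathbf{c}_u+\mathbf{1}$. A vertex $v$ is half-activated if $\boldsymbol{\ell}(v)=1$ for some null pattern $\boldsymbol{\ell}$; otherwise it is always-activated if $\mathbf{p}(v)=1$ for every $\mathbf{p}$ with $N(G)\mathbf{p}=\mathbf{1}$, and never-activated if $\mathbf{p}(v)=0$ for every such $\mathbf{p}$. The activation number $\mathcal{A}_G(v)$ is $1$, $0$, $-1$ for always-, never-, half-activated respectively. $G_1uwG_2$ denotes the graph obtained from the disjoint union of $G_1,G_2$ by adding the edge $uw$. *)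

(* Defs.v *)
From HB Require Import structures.
From mathcomp Require Import all_boot all_order all_algebra.
Set Implicit Arguments. Unset Strict Implicit. Unset Printing Implicit Defensive.
Import GRing.Theory Num.Theory.
Local Open Scope ring_scope.

Definition simple_graph (n : nat) (e : rel 'I_n) : Prop :=
  symmetric e /\ irreflexive e.

Definition Nmx (n : nat) (e : rel 'I_n) : 'M['F_2]_n :=
  \matrix_(i, j) ((i == j) || e i j)%:R.

Definition ones (n : nat) : 'cV['F_2]_n := const_mx 1.

Definition cbar (n : nat) (u : 'I_n) : 'cV['F_2]_n :=
  \col_i (if i == u then 1 else 0) + ones n.

(* Nullity: dim of {p | N p = 0}; kermx A^T has as row space {u | A u^T = 0}. *)
Definition nullity (n : nat) (e : rel 'I_n) : nat :=
  \rank (kermx (Nmx e)^T).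

Definition half_activated (n : nat) (e : rel 'I_n) (v : 'I_n) : bool :=
  [exists l : 'cV['F_2]_n, (Nmx e *m l == 0) && (l v 0 == 1)].

Definition always_activated (n : nat) (e : rel 'I_n) (v : 'I_n) : bool :=
  ~~ half_activated e v &&
  [forall p : 'cV['F_2]_n, (Nmx e *m p == ones n) ==> (p v 0 == 1)].

Definition never_activated (n : nat) (e : rel 'I_n) (v : 'I_n) : bool :=
  ~~ half_activated e v &&
  [forall p : 'cV['F_2]_n, (Nmx e *m p == ones n) ==> (p v 0 == 0)].

(* Activation number: 1 always, 0 never, -1 half.  (Exactly one of the three
   predicates holds, since 1 is always solvable.) *)
Definition act (n : nat) (e : rel 'I_n) (v : 'I_n) : int :=
  if half_activated e v then -1
  else if always_activated e v then 1 else 0.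

Definition joinG (n1 n2 : nat) (e1 : rel 'I_n1) (e2 : rel 'I_n2)
  (u : 'I_n1) (w : 'I_n2) : rel 'I_(n1 + n2) :=
  fun x y =>
    match split x, split y with
    | inl a, inl b => e1 a b
    | inr a, inr b => e2 a b
    | inl a, inr b => (a == u) && (b == w)
    | inr a, inl b => (a == w) && (b == u)
    end.

(* Main.v *)
Require Import Defs.
From HB Require Import structures.
From mathcomp Require Import all_boot all_order all_algebra.
From mathcomp Require Import zify ring.
Import GRing.Theory Num.Theory.
Local Open Scope ring_scope.
Set Implicit Arguments. Unset Strict Implicit. Unset Printing Implicit Defensive.

Local Notation F := 'F_2.

Lemma F2_cases (x : F) : x = 0 \/ x = 1.
Proof. case: x => -[|[|//]] ? ; [left|right]; exact: val_inj. Qed.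
Lemma F2_11 : (1 + 1 : F) = 0.
Proof. exact: val_inj. Qed.
Lemma F2_xx (x : F) : x + x = 0.
Proof. by case: (F2_cases x) => ->; rewrite ?addr0 ?F2_11. Qed.
Lemma F2_opp (x : F) : - x = x.
Proof. by case: (F2_cases x) => ->; [rewrite oppr0 | apply: val_inj]. Qed.
Lemma F2_sq (x : F) : x * x = x.
Proof. by case: (F2_cases x) => ->; rewrite ?mulr0 ?mulr1. Qed.

Lemma mx_xx m n (M : 'M[F]_(m, n)) : M + M = 0.
Proof. by apply/matrixP => i j; rewrite !mxE F2_xx. Qed.
Lemma mx_opp m n (M : 'M[F]_(m, n)) : - M = M.
Proof. by apply/matrixP => i j; rewrite !mxE F2_opp. Qed.
Lemma mx_add_eq m n (M P Q : 'M[F]_(m, n)) : M + P = Q -> M = Q + P.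
Proof. by move=> <-; rewrite -addrA mx_xx addr0. Qed.

Lemma Nmx_tr n (e : rel 'I_n) : simple_graph e -> (Nmx e)^T = Nmx e.
Proof.
case=> sym _; apply/matrixP => i j; rewrite !mxE eq_sym sym //.
Qed.

Lemma sym_dot n (A : 'M[F]_n) (l x : 'cV[F]_n) : A^T = A ->
  l^T *m (A *m x) = (A *m l)^T *m x.
Proof. by move=> hA; rewrite trmx_mul hA mulmxA. Qed.

Lemma sum_sym0 n (f : 'I_n -> 'I_n -> F) :
  (forall i j, f i j = f j i) -> (forall i, f i i = 0) ->
  \sum_i \sum_j f i j = 0.
Proof.
move=> fs f0.
have split1 i : \sum_j f i j = \sum_(j : 'I_n) (if (i < j)%N then f i j else 0)
                              + \sum_(j : 'I_n) (if (j < i)%N then f i j else 0).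
  rewrite -big_split /=; apply: eq_bigr => j _.
  case: (ltngtP i j) => [h|h|/val_inj ->]; rewrite ?addr0 ?add0r ?f0 //.
rewrite (eq_bigr _ (fun i _ => split1 i)) big_split /=.
rewrite [X in _ + X]exchange_big /=.
rewrite [X in _ + X](eq_bigr (fun i : 'I_n => \sum_(j : 'I_n) (if (i < j)%N then f i j else 0))).
  by rewrite F2_xx.
move=> i _; apply: eq_bigr => j _; by rewrite fs.
Qed.

Lemma quadN n (e : rel 'I_n) (x : 'cV[F]_n) : simple_graph e ->
  x^T *m (Nmx e *m x) = x^T *m ones n.
Proof.
case=> sym irr; apply/matrixP => a b; rewrite (ord1 a) (ord1 b) !mxE.
pose f j k := x j 0 * ((e j k)%:R * x k 0).
have h j : x^T 0 j * (Nmx e *m x) j 0 = x^T 0 j * ones n j 0 + \sum_k f j k.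
  rewrite !mxE mulr1 big_distrr /=.
  have hs : \sum_k (if k == j then x j 0 else 0) = x j 0.
    by rewrite -big_mkcond /= (big_pred1_eq _ j (fun _ => x j 0)).
  rewrite -[X in _ = X + _]hs.
  rewrite -big_split /=; apply: eq_bigr => k _; rewrite !mxE /f.
  case: (eqVneq k j) => [->|ne]; first by rewrite ?eqxx /= ?irr mul0r mulr0 addr0 mul1r F2_sq.
  idtac.
  by rewrite ?(negbTE ne) /= add0r.
rewrite (eq_bigr _ (fun j _ => h j)) big_split /= sum_sym0 ?addr0 //.
  by move=> i j; rewrite /f (sym i j) mulrCA [RHS]mulrCA; congr (_ * _); exact: mulrC.
by move=> i; rewrite /f irr mul0r mulr0.
Qed.

Lemma col_complement n (A : 'M[F]_n) (b : 'cV[F]_n) : A^T = A ->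
  (forall l : 'cV[F]_n, A *m l = 0 -> l^T *m b = 0) -> exists x, A *m x = b.
Proof.
move=> hA hl; set K := kermx A.
have KA : K *m A = 0 := mulmx_ker A.
have Kb : K *m b = 0.
  apply/row_matrixP => i; rewrite row_mul row0.
  have := hl (row i K)^T; rewrite trmxK; apply.
  by rewrite -[A in A *m _]hA -trmx_mul -row_mul KA row0 trmx0.
have s1 : (b^T <= kermx K^T)%MS by rewrite sub_kermx -trmx_mul Kb trmx0.
have s2 : (A <= kermx K^T)%MS.
  by rewrite sub_kermx -[A in A *m _]hA -trmx_mul KA trmx0.
have rk : \rank (kermx K^T) = \rank A.
  by rewrite mxrank_ker mxrank_tr mxrank_ker subKn // rank_leq_row.
have eqA : (A == kermx K^T)%MS.
  by have := mxrank_leqif_eq s2; rewrite rk => -[_ <-].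
have : (b^T <= A)%MS by rewrite (eqmxP eqA).
case/submxP => D hD; exists D^T.
by rewrite -[A in A *m _]hA -trmx_mul -hD trmxK.
Qed.

Lemma sol_ones n (e : rel 'I_n) : simple_graph e -> exists p, Nmx e *m p = ones n.
Proof.
move=> sg; apply: col_complement; first exact: Nmx_tr.
by move=> l hl; rewrite -(quadN l sg) hl mulmx0.
Qed.

Lemma mx11_eq (a b : F) : (a%:M : 'M_1) = b%:M -> a = b.
Proof. by move/(congr1 (fun M : 'M_1 => M 0 0)); rewrite !mxE. Qed.

Lemma dot_delta n (x : 'cV[F]_n) v : x^T *m delta_mx v 0 = (x v 0)%:M.
Proof.
apply/matrixP => a b; rewrite (ord1 a) (ord1 b) !mxE /=.
rewrite (bigD1 v) //= big1 ?addr0; first by rewrite !mxE !eqxx mulr1.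
by move=> k /negbTE kv; rewrite !mxE kv mulr0.
Qed.

Lemma cbarE n (v : 'I_n) : cbar v = delta_mx v 0 + ones n.
Proof.
by congr (_ + _); apply/matrixP => i j; rewrite !mxE (ord1 j) eqxx andbT; case: eqP.
Qed.

Lemma one_neq0F : (1 : F) != 0.
Proof. exact: oner_neq0. Qed.

Section Vertex.
Variables (n : nat) (e : rel 'I_n) (v : 'I_n).
Hypothesis sg : simple_graph e.
Local Notation N := (Nmx e).
Local Notation ev := (@delta_mx F n 1 v ord0).

Lemma halfP : reflect (exists l : 'cV[F]_n, N *m l = 0 /\ l v 0 = 1) (half_activated e v).
Proof.
apply: (iffP existsP) => [[l /andP[/eqP h1 /eqP h2]]|[l [h1 h2]]]; first by exists l.
by exists l; rewrite h1 h2 !eqxx.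
Qed.

Lemma notHalf_ker : ~~ half_activated e v ->
  forall l : 'cV[F]_n, N *m l = 0 -> l v 0 = 0.
Proof.
move=> nh l hl; case: (F2_cases (l v 0)) => // h1.
by case/negP: nh; apply/halfP; exists l.
Qed.

Lemma sol_diff : ~~ half_activated e v -> forall p q : 'cV[F]_n,
  N *m p = ones n -> N *m q = ones n -> p v 0 = q v 0.
Proof.
move=> nh p q hp hq.
have := @notHalf_ker nh (p - q); rewrite mulmxBr hp hq subrr => /(_ erefl).
by rewrite !mxE; apply: subr0_eq.
Qed.

Lemma act_m1 : act e v = -1 -> half_activated e v.
Proof. by rewrite /act; case: ifP => // _; case: ifP. Qed.

Lemma act_0 : act e v = 0 ->
  ~~ half_activated e v /\ forall p : 'cV[F]_n, N *m p = ones n -> p v 0 = 0.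
Proof.
rewrite /act; case: ifP => // nh; case: ifP => // na _; split; first by rewrite ?nh.
have [p0 hp0] := sol_ones sg.
move: na; rewrite /always_activated nh /= => /negbT /forallPn [p1].
rewrite negb_imply => /andP[/eqP h1 h2] p hp.
rewrite (sol_diff (negbT nh) hp h1).
by case: (F2_cases (p1 v 0)) h2 => ->.
Qed.

Lemma act_1 : act e v = 1 ->
  ~~ half_activated e v /\ forall p : 'cV[F]_n, N *m p = ones n -> p v 0 = 1.
Proof.
rewrite /act; case: ifP => // nh; case: ifP => // na _; split; first by rewrite ?nh.
move: na; rewrite /always_activated => /andP[_ /forallP h] p hp.
by have /implyP/(_ (introT eqP hp))/eqP := h p.
Qed.

Lemma act_half : half_activated e v -> act e v = -1.
Proof. by rewrite /act => ->. Qed.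

Lemma act_zero : ~~ half_activated e v ->
  (forall p : 'cV[F]_n, N *m p = ones n -> p v 0 = 0) -> act e v = 0.
Proof.
move=> nh h; rewrite /act (negbTE nh) /always_activated nh /=.
have [p0 hp0] := sol_ones sg.
case: ifP => // /forallP /(_ p0) /implyP /(_ (introT eqP hp0)).
by rewrite h // eq_sym (negbTE one_neq0F).
Qed.

Lemma act_one : ~~ half_activated e v ->
  (forall p : 'cV[F]_n, N *m p = ones n -> p v 0 = 1) -> act e v = 1.
Proof.
move=> nh h; rewrite /act (negbTE nh) /always_activated nh /=.
case: ifP => // /negbT /forallPn [p].
by rewrite negb_imply => /andP[/eqP hp]; rewrite h // eqxx.
Qed.

Lemma act_cases : act e v = -1 \/ act e v = 0 \/ act e v = 1.
Proof. by rewrite /act; case: ifP; [left | case: ifP; auto]. Qed.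

Lemma nh_delta : ~~ half_activated e v -> exists x : 'cV[F]_n, N *m x = ev.
Proof.
move=> nh; apply: col_complement; first exact: Nmx_tr.
by move=> l hl; rewrite dot_delta (notHalf_ker nh hl) raddf0.
Qed.

Lemma delta_val (x : 'cV[F]_n) (p : 'cV[F]_n) :
  N *m x = ev -> N *m p = ones n -> x v 0 = p v 0.
Proof.
move=> hx hp; apply: mx11_eq; rewrite -!dot_delta -hx quadN //.
rewrite sym_dot ?Nmx_tr // hp.
by rewrite -[RHS]trmxK trmx_mul trmxK; apply/matrixP => a b; rewrite (ord1 a) (ord1 b) !mxE.
Qed.

Lemma cbar_val (q p : 'cV[F]_n) : ~~ half_activated e v ->
  N *m q = cbar v -> N *m p = ones n -> q v 0 = 0.
Proof.
move=> nh hq hp.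
have hx : N *m (p + q) = ev by rewrite mulmxDr hp hq cbarE addrC -addrA mx_xx addr0.
have := delta_val hx hp; rewrite mxE => /eqP; rewrite -subr_eq0 addrAC subrr add0r.
by move/eqP.
Qed.

Lemma half_delta (x : 'cV[F]_n) : half_activated e v -> N *m x = ev -> False.
Proof.
move=> /halfP [l [hl l1]] hx.
have := dot_delta l v; rewrite -hx sym_dot ?Nmx_tr // hl trmx0 mul0mx l1.
move/(congr1 (fun M : 'M_1 => M 0 0)); rewrite !mxE /=.
by move/eqP; rewrite eq_sym (negbTE one_neq0F).
Qed.

Lemma half_cbar (q : 'cV[F]_n) : half_activated e v -> N *m q = cbar v -> False.
Proof.
move=> /halfP [l [hl l1]] hq.
have : l^T *m (N *m q) = 0 by rewrite sym_dot ?Nmx_tr // hl trmx0 mul0mx.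
rewrite hq cbarE mulmxDr dot_delta l1 -(quadN l sg) hl mulmx0 addr0.
move/(congr1 (fun M : 'M_1 => M 0 0)); rewrite !mxE /=.
by move/eqP; rewrite (negbTE one_neq0F).
Qed.

End Vertex.

Section Rank1.
Variables (n : nat) (A : 'M[F]_n) (e : 'cV[F]_n).
Hypothesis hA : A^T = A.

Lemma B_tr : (A + e *m e^T)^T = A + e *m e^T.
Proof. by rewrite linearD /= trmx_mul trmxK hA. Qed.

Lemma sub_rowspace (x b : 'cV[F]_n) (M : 'M[F]_n) : M^T = M -> M *m x = b ->
  (b^T <= M)%MS.
Proof.
move=> hM hx; apply/submxP; exists x^T.
by rewrite -[M in _ *m M]hM -trmx_mul hx.
Qed.

Lemma sum_sub_r : (e^T^T *m e^T <= e^T)%MS.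
Proof. exact: submxMl. Qed.

Lemma rank1_half (l : 'cV[F]_n) : A *m l = 0 -> e^T *m l = 1%:M ->
  \rank (A + e *m e^T)%R = (\rank A).+1.
Proof.
move=> hl he; set B := A + e *m e^T; pose r := e^T.
have Bl : B *m l = e by rewrite mulmxDl hl add0r -mulmxA he mulmx1.
have rB : (r <= B)%MS by apply: (sub_rowspace B_tr Bl).
have rr : (r^T *m r <= r)%MS by exact: submxMl.
have eB : (B == A + r)%MS.
  apply/andP; split.
    apply: addmx_sub; first exact: addsmxSl.
    by rewrite /r trmxK in rr; apply: submx_trans rr (addsmxSr _ _).
  rewrite addsmx_sub rB andbT.
  have -> : A = B + e *m e^T by rewrite /B -addrA mx_xx addr0.
  apply: addmx_sub => //; rewrite -[e in e *m _]trmxK.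
  exact: submx_trans rr rB.
rewrite (eqmx_rank eB).
have nrA : ~~ (r <= A)%MS.
  apply/negP => /submxP [D hD].
  have : r *m l = 0 by rewrite hD -mulmxA hl mulmx0.
  rewrite /r he => /(congr1 (fun M : 'M_1 => M 0 0)); rewrite !mxE /=.
  by move/eqP; rewrite (negbTE one_neq0F).
have le1 := mxrank_leqif_sup (addsmxSl A r).
have lt : (\rank A < \rank (A + r)%MS)%N.
  rewrite ltn_neqAle (mxrankS (addsmxSl A r)) andbT; apply/negP => /eqP h.
  have : (A + r <= A)%MS by rewrite -(geq_leqif le1) h.
  by rewrite addsmx_sub submx_refl /= (negbTE nrA).
have ub : (\rank (A + r)%MS <= \rank A + 1)%N.
  apply: leq_trans (mxrank_adds_leqif A r) _.
  by rewrite leq_add2l rank_leq_row.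
by rewrite addn1 in ub; apply/eqP; rewrite eqn_leq ub lt.
Qed.

Lemma rank1_same (x : 'cV[F]_n) : A *m x = e -> e^T *m x = 0 ->
  \rank (A + e *m e^T)%R = \rank A.
Proof.
move=> hx he; set B := A + e *m e^T; pose r := e^T.
have Bx : B *m x = e by rewrite mulmxDl hx -mulmxA he mulmx0 addr0.
have rB : (r <= B)%MS by apply: (sub_rowspace B_tr Bx).
have rA : (r <= A)%MS by apply: (sub_rowspace hA hx).
have rr : (r^T *m r <= r)%MS by exact: submxMl.
rewrite /r trmxK in rr.
apply/eqmx_rank/andP; split.
  by apply: addmx_sub => //; apply: submx_trans rr rA.
have -> : A = B + e *m e^T by rewrite /B -addrA mx_xx addr0.
by apply: addmx_sub => //; apply: submx_trans rr rB.
Qed.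

End Rank1.

Lemma rank1_dec n (A : 'M[F]_n) (e x : 'cV[F]_n) : A^T = A ->
  A *m x = e -> e^T *m x = 1%:M -> \rank A = (\rank (A + e *m e^T)%R).+1.
Proof.
move=> hA hx he; set B := A + e *m e^T.
have Bx : B *m x = 0 by rewrite mulmxDl hx -mulmxA he mulmx1 mx_xx.
have := rank1_half (B_tr e hA) Bx he.
by rewrite /B -addrA mx_xx addr0 => ->.
Qed.

Local Notation ecol v := (delta_mx v (@ord0 0) : 'cV[F]__).

Lemma rank_congr n (P D : 'M[F]_n) : P \in unitmx -> \rank (P^T *m D *m P) = \rank D.
Proof.
move=> uP; rewrite mxrankMfree ?row_free_unit //.
by rewrite -mxrank_tr trmx_mul trmxK mxrankMfree ?mxrank_tr // row_free_unit.
Qed.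

Lemma split_l m n (i : 'I_m) : split (lshift n i) = inl i.
Proof. exact: (unsplitK (inl _ i)). Qed.
Lemma split_r m n (i : 'I_n) : split (rshift m i) = inr i.
Proof. exact: (unsplitK (inr _ i)). Qed.

Lemma NH_block n1 n2 (e1 : rel 'I_n1) (e2 : rel 'I_n2) (u : 'I_n1) (w : 'I_n2) :
  Nmx (joinG e1 e2 u w) =
  block_mx (Nmx e1) (ecol u *m (ecol w)^T) (ecol w *m (ecol u)^T) (Nmx e2).
Proof.
rewrite !trmx_delta !mul_delta_mx.
apply/matrixP => i j; rewrite -(splitK i) -(splitK j).
case: (split i) => a; case: (split j) => b;
  rewrite /= ?block_mxEul ?block_mxEur ?block_mxEdl ?block_mxEdr !mxE /joinG.
all: by rewrite ?split_l ?split_r ?eq_shift.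
Qed.

Lemma congrA n1 n2 (M1 : 'M[F]_n1) (M2 : 'M[F]_n2) u w (x : 'cV[F]_n1) :
  M1^T = M1 -> M1 *m x = ecol u ->
  \rank (block_mx M1 (ecol u *m (ecol w)^T) (ecol w *m (ecol u)^T) M2)
   = (\rank M1 + \rank (M2 + x u 0 *: (ecol w *m (ecol w)^T))%R)%N.
Proof.
move=> h1 hx.
set P := block_mx 1%:M (x *m (ecol w)^T) 0 1%:M.
have uP : P \in unitmx.
  have : P *m P = 1%:M.
    rewrite mulmx_block !mul1mx !mulmx1 !mul0mx !mulmx0 !addr0 ?add0r mx_xx.
    by rewrite [RHS]scalar_mx_block.
  by case/mulmx1_unit.
rewrite -rank_diag_block_mx -(rank_congr _ uP); congr (\rank _).
rewrite tr_block_mx !mulmx_block !trmx1 !trmx0 !mul1mx !mulmx1 !mul0mx !mulmx0 ?addr0 ?add0r.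
have tx : (x *m (ecol w)^T)^T *m M1 = ecol w *m (ecol u)^T.
  have hx' : x^T *m M1 = (ecol u)^T by rewrite -hx trmx_mul h1.
  by rewrite trmx_mul trmxK -mulmxA hx'.
rewrite tx mx_xx mul0mx add0r mulmxA hx mx_xx.
rewrite trmx_mul trmxK -!mulmxA (mulmxA _ (ecol u)) dot_delta mulmxA mul_mx_scalar.
by rewrite -scalemxAl addrC.
Qed.

Lemma congrB n1 n2 (M1 : 'M[F]_n1) (M2 : 'M[F]_n2) u w (x : 'cV[F]_n2) :
  M2^T = M2 -> M2 *m x = ecol w ->
  \rank (block_mx M1 (ecol u *m (ecol w)^T) (ecol w *m (ecol u)^T) M2)
   = (\rank (M1 + x w 0 *: (ecol u *m (ecol u)^T))%R + \rank M2)%N.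
Proof.
move=> h2 hx.
set P := block_mx 1%:M 0 (x *m (ecol u)^T) 1%:M.
have uP : P \in unitmx.
  have : P *m P = 1%:M.
    rewrite mulmx_block !mul1mx !mulmx1 !mul0mx !mulmx0 !addr0 ?add0r mx_xx.
    by rewrite [RHS]scalar_mx_block.
  by case/mulmx1_unit.
rewrite -rank_diag_block_mx -(rank_congr _ uP); congr (\rank _).
rewrite tr_block_mx !mulmx_block !trmx1 !trmx0 !mul1mx !mulmx1 !mul0mx !mulmx0 ?addr0 ?add0r.
have hx' : x^T *m M2 = (ecol w)^T by rewrite -hx trmx_mul h2.
have tx : (x *m (ecol u)^T)^T *m M2 = ecol u *m (ecol w)^T.
  by rewrite trmx_mul trmxK -mulmxA hx'.
rewrite tx mx_xx mul0mx addr0 (mulmxA M2) hx mx_xx.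
rewrite trmx_mul trmxK -!mulmxA (mulmxA _ (ecol w)) dot_delta mulmxA mul_mx_scalar.
by rewrite -scalemxAl.
Qed.

Lemma dot_delta' n (s : 'cV[F]_n) v : (ecol v)^T *m s = (s v 0)%:M.
Proof. by rewrite -[LHS]trmxK trmx_mul trmxK dot_delta tr_scalar_mx. Qed.

Lemma ecol_l n1 n2 (u : 'I_n1) : col_mx (ecol u) (0 : 'cV[F]_n2) = ecol (lshift n2 u).
Proof.
apply/matrixP => i j; rewrite -(splitK i); case: (split i) => a.
  by rewrite /= col_mxEu !mxE eq_shift.
by rewrite /= col_mxEd !mxE eq_shift.
Qed.

Lemma E_l n1 n2 (u : 'I_n1) :
  ecol (lshift n2 u) *m (ecol (lshift n2 u))^T =
  block_mx (ecol u *m (ecol u)^T) 0 0 (0 : 'M[F]_n2).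
Proof.
rewrite !trmx_delta !mul_delta_mx.
apply/matrixP => i j; rewrite -(splitK i) -(splitK j).
by case: (split i) => a; case: (split j) => b;
  rewrite /= ?block_mxEul ?block_mxEur ?block_mxEdl ?block_mxEdr !mxE ?eq_shift ?andbF.
Qed.

Lemma simple_join n1 n2 (e1 : rel 'I_n1) (e2 : rel 'I_n2) u w :
  simple_graph e1 -> simple_graph e2 -> simple_graph (joinG e1 e2 u w).
Proof.
case=> s1 i1 [s2 i2]; split.
  move=> i j; rewrite /joinG; case: (split i) => a; case: (split j) => b; by rewrite 1?andbC.
by move=> i; rewrite /joinG; case: (split i) => a.
Qed.

Section Side.
Variables (n : nat) (e : rel 'I_n) (v : 'I_n).
Hypothesis sg : simple_graph e.
Local Notation N := (Nmx e).

Lemma side_sol (s : 'cV[F]_n) (sig : F) : N *m s + sig *: ecol v = ones n ->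
  (sig = 0 -> N *m s = ones n) /\ (sig = 1 -> N *m s = cbar v).
Proof.
move/mx_add_eq => ->; split => ->; first by rewrite scale0r addr0.
by rewrite scale1r cbarE addrC.
Qed.

Lemma side_sol_nh (c : F) (s : 'cV[F]_n) (sig : F) : ~~ half_activated e v ->
  (forall p : 'cV[F]_n, N *m p = ones n -> p v 0 = c) ->
  N *m s + sig *: ecol v = ones n ->
  (sig = 0 -> s v 0 = c) /\ (sig = 1 -> s v 0 = 0).
Proof.
move=> nh hc /side_sol [h0 h1]; have [p hp] := sol_ones sg; split=> hs.
  by apply: hc; apply: h0.
exact: (cbar_val sg nh (h1 hs) hp).
Qed.

Lemma side_sol_h (s : 'cV[F]_n) (sig : F) : half_activated e v ->
  N *m s + sig *: ecol v = ones n -> sig = 0.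
Proof.
move=> hh /side_sol [_ h1]; case: (F2_cases sig) => // hs.
by case: (half_cbar sg hh (h1 hs)).
Qed.

Lemma side_ker (l : 'cV[F]_n) (t : F) : N *m l + t *: ecol v = 0 ->
  (t = 0 -> N *m l = 0) /\ (t = 1 -> N *m l = ecol v).
Proof.
move/mx_add_eq => ->; split => ->; first by rewrite scale0r addr0.
by rewrite scale1r add0r.
Qed.

Lemma side_ker_nh (c : F) (l : 'cV[F]_n) (t : F) : ~~ half_activated e v ->
  (forall p : 'cV[F]_n, N *m p = ones n -> p v 0 = c) ->
  N *m l + t *: ecol v = 0 ->
  (t = 0 -> l v 0 = 0) /\ (t = 1 -> l v 0 = c).
Proof.
move=> nh hc /side_ker [h0 h1]; have [p hp] := sol_ones sg; split=> ht.
  exact: (notHalf_ker nh (h0 ht)).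
by rewrite (delta_val sg (h1 ht) hp); apply: hc.
Qed.

Lemma side_ker_h (l : 'cV[F]_n) (t : F) : half_activated e v ->
  N *m l + t *: ecol v = 0 -> t = 0.
Proof.
move=> hh /side_ker [_ h1]; case: (F2_cases t) => // ht.
by case: (half_delta sg hh (h1 ht)).
Qed.

Lemma nothalf_of : (forall l : 'cV[F]_n, N *m l = 0 -> l v 0 = 0) ->
  ~~ half_activated e v.
Proof.
move=> h; apply/negP => /halfP [l [hl l1]].
by move: (h l hl); rewrite l1 => /eqP; rewrite (negbTE one_neq0F).
Qed.

Lemma nh_x (c : F) : ~~ half_activated e v ->
  (forall p : 'cV[F]_n, N *m p = ones n -> p v 0 = c) ->
  exists x : 'cV[F]_n, N *m x = ecol v /\ x v 0 = c.
Proof.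
move=> nh hc; have [x hx] := nh_delta sg nh; have [p hp] := sol_ones sg.
by exists x; split => //; rewrite (delta_val sg hx hp) hc.
Qed.

End Side.

Lemma nullity_rank n (e : rel 'I_n) : nullity e = (n - \rank (Nmx e))%N.
Proof. by rewrite /nullity mxrank_ker mxrank_tr. Qed.

Section Join.
Variables (n1 n2 : nat) (e1 : rel 'I_n1) (e2 : rel 'I_n2) (u : 'I_n1) (w : 'I_n2).
Hypotheses (sg1 : simple_graph e1) (sg2 : simple_graph e2).
Local Notation H := (joinG e1 e2 u w).
Local Notation NH := (Nmx (joinG e1 e2 u w)).
Local Notation N1 := (Nmx e1).
Local Notation N2 := (Nmx e2).

Lemma sgH : simple_graph H.
Proof. exact: simple_join. Qed.

Lemma NH_mul (s1 : 'cV[F]_n1) (s2 : 'cV[F]_n2) :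
  NH *m col_mx s1 s2 =
  col_mx (N1 *m s1 + s2 w 0 *: ecol u) (N2 *m s2 + s1 u 0 *: ecol w).
Proof.
rewrite NH_block mul_block_col -!mulmxA !dot_delta' !mul_mx_scalar.
by rewrite [X in col_mx _ X]addrC.
Qed.

Lemma solH (s : 'cV[F]_(n1 + n2)) : NH *m s = ones (n1 + n2) ->
  N1 *m usubmx s + dsubmx s w 0 *: ecol u = ones n1 /\
  N2 *m dsubmx s + usubmx s u 0 *: ecol w = ones n2.
Proof.
by rewrite -[s in NH *m s]vsubmxK NH_mul /ones -(@col_mx_const _ n1 n2 1 (1 : F)) => /eq_col_mx.
Qed.

Lemma kerH (s : 'cV[F]_(n1 + n2)) : NH *m s = 0 ->
  N1 *m usubmx s + dsubmx s w 0 *: ecol u = 0 /\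
  N2 *m dsubmx s + usubmx s u 0 *: ecol w = 0.
Proof.
by rewrite -[s in NH *m s]vsubmxK NH_mul -col_mx0 => /eq_col_mx.
Qed.

Lemma kerH_intro (l1 : 'cV[F]_n1) (l2 : 'cV[F]_n2) :
  N1 *m l1 + l2 w 0 *: ecol u = 0 -> N2 *m l2 + l1 u 0 *: ecol w = 0 ->
  NH *m col_mx l1 l2 = 0.
Proof. by move=> h1 h2; rewrite NH_mul h1 h2 col_mx0. Qed.

Lemma valu (s : 'cV[F]_(n1 + n2)) : s (lshift n2 u) 0 = usubmx s u 0.
Proof. by rewrite mxE. Qed.
Lemma valw (s : 'cV[F]_(n1 + n2)) : s (rshift n1 w) 0 = dsubmx s w 0.
Proof. by rewrite mxE. Qed.

Lemma nullZ n (e : rel 'I_n) :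
  ((nullity e)%:Z = n%:Z - (\rank (Nmx e))%:Z)%R.
Proof. by rewrite nullity_rank -subzn // rank_leq_row. Qed.

Lemma dnuE :
  ((nullity H)%:Z - (nullity e1)%:Z - (nullity e2)%:Z =
   (\rank N1)%:Z + (\rank N2)%:Z - (\rank NH)%:Z)%R.
Proof.
rewrite !nullZ PoszD.
move: (\rank N1) (\rank N2) (\rank NH) => a b c; ring.
Qed.


Lemma F2_10 : (1 : F) = 0 -> False.
Proof. by move/eqP; rewrite (negbTE one_neq0F). Qed.
Lemma F2_01 : (0 : F) = 1 -> False.
Proof. by move/esym/F2_10. Qed.

Ltac f2c := repeat match goal with
 | h : ?a = ?a -> _ |- _ => specialize (h erefl)
 | h : _ /\ _ |- _ => destruct h
 | h : (1 : F) = 0 |- _ => case: (F2_10 h)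
 | h : (0 : F) = 1 |- _ => case: (F2_01 h)
 end.

Ltac f2split t := case: (F2_cases t) => ->.

Local Notation uH := (lshift n2 u).
Local Notation wH := (rshift n1 w).

Lemma case00 : act e1 u = 0 -> act e2 w = 0 ->
  act H uH = 0 /\ act H wH = 0 /\ (\rank NH = \rank N1 + \rank N2)%N /\
  forall s, NH *m s = ones _ -> N1 *m usubmx s = ones n1 /\ N2 *m dsubmx s = ones n2.
Proof.
move=> /(act_0 sg1) [nh1 hc1] /(act_0 sg2) [nh2 hc2].
have solv s : NH *m s = ones _ -> usubmx s u 0 = 0 /\ dsubmx s w 0 = 0.
  case/solH => E1 E2.
  have := side_sol_nh sg1 nh1 hc1 E1; have := side_sol_nh sg2 nh2 hc2 E2.
  by f2split (usubmx s u 0); f2split (dsubmx s w 0) => ? ?; f2c.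
have kerv (L : 'cV[F]_(n1 + n2)) : NH *m L = 0 -> usubmx L u 0 = 0 /\ dsubmx L w 0 = 0.
  move=> hL; have [E1 E2] := kerH hL.
  have := side_ker_nh sg1 nh1 hc1 E1; have := side_ker_nh sg2 nh2 hc2 E2.
  by f2split (usubmx L u 0); f2split (dsubmx L w 0) => ? ?; f2c.
split; [|split; [|split]].
- apply: (act_zero sgH).
    by apply: nothalf_of => L /kerv []; rewrite valu.
  by move=> p /solv []; rewrite valu.
- apply: (act_zero sgH).
    by apply: nothalf_of => L /kerv []; rewrite valw.
  by move=> p /solv []; rewrite valw.
- have [x [hx x0]] := nh_x sg1 nh1 hc1.
  by rewrite NH_block (congrA _ _ (Nmx_tr sg1) hx) x0 scale0r addr0.
- move=> s hs; have [E1 E2] := solH hs; have [h1 h2] := solv s hs.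
  have [S1 _] := side_sol E1; have [S2 _] := side_sol E2.
  by split; [apply: S1 | apply: S2].
Qed.

Lemma witness_val1 (l1 : 'cV[F]_n1) (l2 : 'cV[F]_n2) : col_mx l1 l2 uH 0 = l1 u 0.
Proof. exact: col_mxEu. Qed.
Lemma witness_val2 (l1 : 'cV[F]_n1) (l2 : 'cV[F]_n2) : col_mx l1 l2 wH 0 = l2 w 0.
Proof. exact: col_mxEd. Qed.

Lemma case01 : act e1 u = 0 -> act e2 w = 1 ->
  act H uH = 0 /\ act H wH = 1 /\ (\rank NH = \rank N1 + \rank N2)%N /\
  forall s, NH *m s = ones _ -> N1 *m usubmx s = cbar u /\ N2 *m dsubmx s = ones n2.
Proof.
move=> /(act_0 sg1) [nh1 hc1] /act_1 [nh2 hc2].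
have solv s : NH *m s = ones _ -> usubmx s u 0 = 0 /\ dsubmx s w 0 = 1.
  case/solH => E1 E2.
  have := side_sol_nh sg1 nh1 hc1 E1; have := side_sol_nh sg2 nh2 hc2 E2.
  by f2split (usubmx s u 0); f2split (dsubmx s w 0) => ? ?; f2c.
have kerv (L : 'cV[F]_(n1 + n2)) : NH *m L = 0 -> usubmx L u 0 = 0 /\ dsubmx L w 0 = 0.
  move=> hL; have [E1 E2] := kerH hL.
  have := side_ker_nh sg1 nh1 hc1 E1; have := side_ker_nh sg2 nh2 hc2 E2.
  by f2split (usubmx L u 0); f2split (dsubmx L w 0) => ? ?; f2c.
split; [|split; [|split]].
- apply: (act_zero sgH).
    by apply: nothalf_of => L /kerv []; rewrite valu.
  by move=> p /solv []; rewrite valu.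
- apply: act_one.
    by apply: nothalf_of => L /kerv []; rewrite valw.
  by move=> p /solv []; rewrite valw.
- have [x [hx x0]] := nh_x sg1 nh1 hc1.
  by rewrite NH_block (congrA _ _ (Nmx_tr sg1) hx) x0 scale0r addr0.
- move=> s hs; have [E1 E2] := solH hs; have [h1 h2] := solv s hs.
  have [_ S1] := side_sol E1; have [S2 _] := side_sol E2.
  by split; [apply: S1 | apply: S2].
Qed.

Lemma case10 : act e1 u = 1 -> act e2 w = 0 ->
  act H uH = 1 /\ act H wH = 0 /\ (\rank NH = \rank N1 + \rank N2)%N /\
  forall s, NH *m s = ones _ -> N1 *m usubmx s = ones n1 /\ N2 *m dsubmx s = cbar w.
Proof.
move=> /act_1 [nh1 hc1] /(act_0 sg2) [nh2 hc2].
have solv s : NH *m s = ones _ -> usubmx s u 0 = 1 /\ dsubmx s w 0 = 0.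
  case/solH => E1 E2.
  have := side_sol_nh sg1 nh1 hc1 E1; have := side_sol_nh sg2 nh2 hc2 E2.
  by f2split (usubmx s u 0); f2split (dsubmx s w 0) => ? ?; f2c.
have kerv (L : 'cV[F]_(n1 + n2)) : NH *m L = 0 -> usubmx L u 0 = 0 /\ dsubmx L w 0 = 0.
  move=> hL; have [E1 E2] := kerH hL.
  have := side_ker_nh sg1 nh1 hc1 E1; have := side_ker_nh sg2 nh2 hc2 E2.
  by f2split (usubmx L u 0); f2split (dsubmx L w 0) => ? ?; f2c.
split; [|split; [|split]].
- apply: act_one.
    by apply: nothalf_of => L /kerv []; rewrite valu.
  by move=> p /solv []; rewrite valu.
- apply: (act_zero sgH).
    by apply: nothalf_of => L /kerv []; rewrite valw.
  by move=> p /solv []; rewrite valw.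
- have [x [hx x0]] := nh_x sg2 nh2 hc2.
  by rewrite NH_block (congrB _ _ (Nmx_tr sg2) hx) x0 scale0r addr0.
- move=> s hs; have [E1 E2] := solH hs; have [h1 h2] := solv s hs.
  have [S1 _] := side_sol E1; have [_ S2] := side_sol E2.
  by split; [apply: S1 | apply: S2].
Qed.

Lemma case0m : act e1 u = 0 -> act e2 w = -1 ->
  act H uH = 0 /\ act H wH = -1 /\ (\rank NH = \rank N1 + \rank N2)%N /\
  forall s, NH *m s = ones _ -> N2 *m dsubmx s = ones n2 /\
    (s wH 0 = 0 -> N1 *m usubmx s = ones n1) /\ (s wH 0 = 1 -> N1 *m usubmx s = cbar u).
Proof.
move=> /(act_0 sg1) [nh1 hc1] /act_m1 hh2.
have solv s : NH *m s = ones _ -> usubmx s u 0 = 0.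
  case/solH => E1 E2.
  have := side_sol_nh sg1 nh1 hc1 E1; have := side_sol_h sg2 hh2 E2.
  by f2split (usubmx s u 0); f2split (dsubmx s w 0) => ? ?; f2c.
have kerv (L : 'cV[F]_(n1 + n2)) : NH *m L = 0 -> usubmx L u 0 = 0.
  move=> hL; have [E1 E2] := kerH hL.
  have := side_ker_nh sg1 nh1 hc1 E1; have := side_ker_h sg2 hh2 E2.
  by f2split (usubmx L u 0); f2split (dsubmx L w 0) => ? ?; f2c.
have [x [hx x0]] := nh_x sg1 nh1 hc1.
split; [|split; [|split]].
- apply: (act_zero sgH).
    by apply: nothalf_of => L /kerv; rewrite valu.
  by move=> p /solv; rewrite valu.
- apply: act_half; apply/halfP.
  have /halfP [l [hl l1]] := hh2.
  exists (col_mx x l); split; last by rewrite witness_val2.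
  apply: kerH_intro; first by rewrite hx l1 scale1r mx_xx.
  by rewrite hl x0 scale0r addr0.
- by rewrite NH_block (congrA _ _ (Nmx_tr sg1) hx) x0 scale0r addr0.
- move=> s hs; have [E1 E2] := solH hs; have h1 := solv s hs.
  have [S1 S1'] := side_sol E1; have [S2 _] := side_sol E2.
  by rewrite valw; split; [apply: S2 | split].
Qed.

Lemma casem0 : act e1 u = -1 -> act e2 w = 0 ->
  act H uH = -1 /\ act H wH = 0 /\ (\rank NH = \rank N1 + \rank N2)%N /\
  forall s, NH *m s = ones _ -> N1 *m usubmx s = ones n1 /\
    (s uH 0 = 0 -> N2 *m dsubmx s = ones n2) /\ (s uH 0 = 1 -> N2 *m dsubmx s = cbar w).
Proof.
move=> /act_m1 hh1 /(act_0 sg2) [nh2 hc2].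
have solv s : NH *m s = ones _ -> dsubmx s w 0 = 0.
  case/solH => E1 E2.
  have := side_sol_h sg1 hh1 E1; have := side_sol_nh sg2 nh2 hc2 E2.
  by f2split (usubmx s u 0); f2split (dsubmx s w 0) => ? ?; f2c.
have kerv (L : 'cV[F]_(n1 + n2)) : NH *m L = 0 -> dsubmx L w 0 = 0.
  move=> hL; have [E1 E2] := kerH hL.
  have := side_ker_h sg1 hh1 E1; have := side_ker_nh sg2 nh2 hc2 E2.
  by f2split (usubmx L u 0); f2split (dsubmx L w 0) => ? ?; f2c.
have [x [hx x0]] := nh_x sg2 nh2 hc2.
split; [|split; [|split]].
- apply: act_half; apply/halfP.
  have /halfP [l [hl l1]] := hh1.
  exists (col_mx l x); split; last by rewrite witness_val1.
  apply: kerH_intro; first by rewrite hl x0 scale0r addr0.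
  by rewrite hx l1 scale1r mx_xx.
- apply: (act_zero sgH).
    by apply: nothalf_of => L /kerv; rewrite valw.
  by move=> p /solv; rewrite valw.
- by rewrite NH_block (congrB _ _ (Nmx_tr sg2) hx) x0 scale0r addr0.
- move=> s hs; have [E1 E2] := solH hs; have h1 := solv s hs.
  have [S1 _] := side_sol E1; have [S2 S2'] := side_sol E2.
  by rewrite valu; split; [apply: S1 | split].
Qed.

Lemma case11 : act e1 u = 1 -> act e2 w = 1 ->
  act H uH = -1 /\ act H wH = -1 /\ ((\rank NH).+1 = \rank N1 + \rank N2)%N /\
  forall s, NH *m s = ones _ ->
    (s uH 0 = 0 /\ s wH 0 = 1 /\ N1 *m usubmx s = cbar u /\ N2 *m dsubmx s = ones n2) \/
    (s uH 0 = 1 /\ s wH 0 = 0 /\ N1 *m usubmx s = ones n1 /\ N2 *m dsubmx s = cbar w).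
Proof.
move=> /act_1 [nh1 hc1] /act_1 [nh2 hc2].
have [x1 [hx1 x10]] := nh_x sg1 nh1 hc1.
have [x2 [hx2 x20]] := nh_x sg2 nh2 hc2.
have wit : NH *m col_mx x1 x2 = 0.
  by apply: kerH_intro; rewrite ?hx1 ?hx2 ?x10 ?x20 scale1r mx_xx.
split; [|split; [|split]].
- apply: act_half; apply/halfP; exists (col_mx x1 x2); split => //.
  by rewrite witness_val1.
- apply: act_half; apply/halfP; exists (col_mx x1 x2); split => //.
  by rewrite witness_val2.
- rewrite NH_block (congrA _ _ (Nmx_tr sg1) hx1) x10 scale1r.
  rewrite (rank1_dec (Nmx_tr sg2) hx2) ?addnS //.
  by rewrite dot_delta' x20.
- move=> s hs; have [E1 E2] := solH hs.
  have [S1 S1'] := side_sol E1; have [S2 S2'] := side_sol E2.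
  have := side_sol_nh sg1 nh1 hc1 E1; have := side_sol_nh sg2 nh2 hc2 E2.
  rewrite valu valw.
  case: (F2_cases (usubmx s u 0)) => hu; case: (F2_cases (dsubmx s w 0)) => hw;
    rewrite hu hw => ? ?; f2c.
  + by left; split => //; split => //; split; [apply: S1' | apply: S2].
  + by right; split => //; split => //; split; [apply: S1 | apply: S2'].
Qed.

Lemma case1m : act e1 u = 1 -> act e2 w = -1 ->
  act H uH = 0 /\ act H wH = 1 /\ (\rank NH = (\rank N1 + \rank N2).+1)%N /\
  forall s, NH *m s = ones _ -> N1 *m usubmx s = cbar u /\ N2 *m dsubmx s = ones n2.
Proof.
move=> /act_1 [nh1 hc1] /act_m1 hh2.
have solv s : NH *m s = ones _ -> usubmx s u 0 = 0 /\ dsubmx s w 0 = 1.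
  case/solH => E1 E2.
  have := side_sol_nh sg1 nh1 hc1 E1; have := side_sol_h sg2 hh2 E2.
  by f2split (usubmx s u 0); f2split (dsubmx s w 0) => ? ?; f2c.
have kerv (L : 'cV[F]_(n1 + n2)) : NH *m L = 0 -> usubmx L u 0 = 0 /\ dsubmx L w 0 = 0.
  move=> hL; have [E1 E2] := kerH hL.
  have := side_ker_nh sg1 nh1 hc1 E1; have := side_ker_h sg2 hh2 E2.
  by f2split (usubmx L u 0); f2split (dsubmx L w 0) => ? ?; f2c.
split; [|split; [|split]].
- apply: (act_zero sgH).
    by apply: nothalf_of => L /kerv []; rewrite valu.
  by move=> p /solv []; rewrite valu.
- apply: act_one.
    by apply: nothalf_of => L /kerv []; rewrite valw.
  by move=> p /solv []; rewrite valw.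
- have [x [hx x0]] := nh_x sg1 nh1 hc1.
  have /halfP [l [hl l1]] := hh2.
  rewrite NH_block (congrA _ _ (Nmx_tr sg1) hx) x0 scale1r.
  rewrite (rank1_half (Nmx_tr sg2) hl) ?addnS //.
  by rewrite dot_delta' l1.
- move=> s hs; have [E1 E2] := solH hs; have [h1 h2] := solv s hs.
  have [_ S1] := side_sol E1; have [S2 _] := side_sol E2.
  by split; [apply: S1 | apply: S2].
Qed.

Lemma casem1 : act e1 u = -1 -> act e2 w = 1 ->
  act H uH = 1 /\ act H wH = 0 /\ (\rank NH = (\rank N1 + \rank N2).+1)%N /\
  forall s, NH *m s = ones _ -> N1 *m usubmx s = ones n1 /\ N2 *m dsubmx s = cbar w.
Proof.
move=> /act_m1 hh1 /act_1 [nh2 hc2].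
have solv s : NH *m s = ones _ -> usubmx s u 0 = 1 /\ dsubmx s w 0 = 0.
  case/solH => E1 E2.
  have := side_sol_h sg1 hh1 E1; have := side_sol_nh sg2 nh2 hc2 E2.
  by f2split (usubmx s u 0); f2split (dsubmx s w 0) => ? ?; f2c.
have kerv (L : 'cV[F]_(n1 + n2)) : NH *m L = 0 -> usubmx L u 0 = 0 /\ dsubmx L w 0 = 0.
  move=> hL; have [E1 E2] := kerH hL.
  have := side_ker_h sg1 hh1 E1; have := side_ker_nh sg2 nh2 hc2 E2.
  by f2split (usubmx L u 0); f2split (dsubmx L w 0) => ? ?; f2c.
split; [|split; [|split]].
- apply: act_one.
    by apply: nothalf_of => L /kerv []; rewrite valu.
  by move=> p /solv []; rewrite valu.
- apply: (act_zero sgH).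
    by apply: nothalf_of => L /kerv []; rewrite valw.
  by move=> p /solv []; rewrite valw.
- have [x [hx x0]] := nh_x sg2 nh2 hc2.
  have /halfP [l [hl l1]] := hh1.
  rewrite NH_block (congrB _ _ (Nmx_tr sg2) hx) x0 scale1r.
  rewrite (rank1_half (Nmx_tr sg1) hl) ?addSn //.
  by rewrite dot_delta' l1.
- move=> s hs; have [E1 E2] := solH hs; have [h1 h2] := solv s hs.
  have [S1 _] := side_sol E1; have [_ S2] := side_sol E2.
  by split; [apply: S1 | apply: S2].
Qed.

Lemma casemm : act e1 u = -1 -> act e2 w = -1 ->
  act H uH = 0 /\ act H wH = 0 /\ (\rank NH = (\rank N1 + \rank N2).+2)%N /\
  forall s, NH *m s = ones _ -> N1 *m usubmx s = ones n1 /\ N2 *m dsubmx s = ones n2.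
Proof.
move=> /act_m1 hh1 /act_m1 hh2.
have solv s : NH *m s = ones _ -> usubmx s u 0 = 0 /\ dsubmx s w 0 = 0.
  case/solH => E1 E2.
  by split; [apply: (side_sol_h sg2 hh2 E2) | apply: (side_sol_h sg1 hh1 E1)].
have kerv (L : 'cV[F]_(n1 + n2)) : NH *m L = 0 -> usubmx L u 0 = 0 /\ dsubmx L w 0 = 0.
  move=> hL; have [E1 E2] := kerH hL.
  by split; [apply: (side_ker_h sg2 hh2 E2) | apply: (side_ker_h sg1 hh1 E1)].
split; [|split; [|split]].
- apply: (act_zero sgH).
    by apply: nothalf_of => L /kerv []; rewrite valu.
  by move=> p /solv []; rewrite valu.
- apply: (act_zero sgH).
    by apply: nothalf_of => L /kerv []; rewrite valw.
  by move=> p /solv []; rewrite valw.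
- have /halfP [l1 [hl1 l11]] := hh1.
  have /halfP [l2 [hl2 l21]] := hh2.
  have X : NH *m col_mx 0 l2 = ecol uH.
    rewrite NH_mul mulmx0 add0r l21 scale1r hl2 mxE scale0r addr0.
    exact: ecol_l.
  have eX : (ecol uH)^T *m col_mx 0 l2 = 0.
    by rewrite dot_delta' witness_val1 mxE raddf0.
  rewrite -(rank1_same (Nmx_tr sgH) X eX).
  have -> : (NH + ecol uH *m (ecol uH)^T)%R =
    block_mx (N1 + ecol u *m (ecol u)^T)%R (ecol u *m (ecol w)^T)
             (ecol w *m (ecol u)^T) N2.
    by rewrite NH_block E_l add_block_mx !addr0.
  have hM : ((N1 + ecol u *m (ecol u)^T) *m l1 = ecol u)%R.
    by rewrite mulmxDl hl1 add0r -mulmxA dot_delta' l11 mulmx1.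
  rewrite (congrA _ _ (B_tr _ (Nmx_tr sg1)) hM) l11 scale1r.
  rewrite (rank1_half (Nmx_tr sg1) hl1) ?dot_delta' ?l11 //.
  by rewrite (rank1_half (Nmx_tr sg2) hl2) ?dot_delta' ?l21 // addSn addnS.
- move=> s hs; have [E1 E2] := solH hs; have [h1 h2] := solv s hs.
  have [S1 _] := side_sol E1; have [S2 _] := side_sol E2.
  by split; [apply: S1 | apply: S2].
Qed.
End Join.
Ltac splitn := lazymatch goal with |- _ /\ _ => split; [| splitn] | _ => idtac end.

Theorem theorem3p3 (n1 n2 : nat) (e1 : rel 'I_n1) (e2 : rel 'I_n2)
  (u : 'I_n1) (w : 'I_n2) :
  simple_graph e1 -> simple_graph e2 ->
  let H := joinG e1 e2 u w in
  let uH := lshift n2 u in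
  let wH := rshift n1 w in
  let dnu : int := (nullity H)%:Z - (nullity e1)%:Z - (nullity e2)%:Z in
  let a1 := act e1 u in
  let a2 := act e2 w in
  let N1 (s : 'cV['F_2]_(n1 + n2)) := Nmx e1 *m usubmx s in
  let N2 (s : 'cV['F_2]_(n1 + n2)) := Nmx e2 *m dsubmx s in
  let sol (s : 'cV['F_2]_(n1 + n2)) := Nmx H *m s = ones (n1 + n2) in
  (* (i) (0,0) *)
  (a1 = 0 -> a2 = 0 ->
     act H uH = 0 /\ act H wH = 0 /\ dnu = 0 /\
     forall s, sol s -> N1 s = ones n1 /\ N2 s = ones n2) /\
  (* (ii) (0,1) *)
  (a1 = 0 -> a2 = 1 ->
     act H uH = 0 /\ act H wH = 1 /\ dnu = 0 /\
     forall s, sol s -> N1 s = cbar u /\ N2 s = ones n2) /\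
  (* (ii') (1,0) *)
  (a1 = 1 -> a2 = 0 ->
     act H uH = 1 /\ act H wH = 0 /\ dnu = 0 /\
     forall s, sol s -> N1 s = ones n1 /\ N2 s = cbar w) /\
  (* (iii) (0,-1) *)
  (a1 = 0 -> a2 = -1 ->
     act H uH = 0 /\ act H wH = -1 /\ dnu = 0 /\
     forall s, sol s -> N2 s = ones n2 /\
       (s wH 0 = 0 -> N1 s = ones n1) /\ (s wH 0 = 1 -> N1 s = cbar u)) /\
  (* (iii') (-1,0) *)
  (a1 = -1 -> a2 = 0 ->
     act H uH = -1 /\ act H wH = 0 /\ dnu = 0 /\
     forall s, sol s -> N1 s = ones n1 /\
       (s uH 0 = 0 -> N2 s = ones n2) /\ (s uH 0 = 1 -> N2 s = cbar w)) /\
  (* (iv) (1,1) *)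
  (a1 = 1 -> a2 = 1 ->
     act H uH = -1 /\ act H wH = -1 /\ dnu = 1 /\
     forall s, sol s ->
       (s uH 0 = 0 /\ s wH 0 = 1 /\ N1 s = cbar u /\ N2 s = ones n2) \/
       (s uH 0 = 1 /\ s wH 0 = 0 /\ N1 s = ones n1 /\ N2 s = cbar w)) /\
  (* (v) (1,-1) *)
  (a1 = 1 -> a2 = -1 ->
     act H uH = 0 /\ act H wH = 1 /\ dnu = -1 /\
     forall s, sol s -> N1 s = cbar u /\ N2 s = ones n2) /\
  (* (v') (-1,1) *)
  (a1 = -1 -> a2 = 1 ->
     act H uH = 1 /\ act H wH = 0 /\ dnu = -1 /\
     forall s, sol s -> N1 s = ones n1 /\ N2 s = cbar w) /\
  (* (vi) (-1,-1) *)
  (a1 = -1 -> a2 = -1 ->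
     act H uH = 0 /\ act H wH = 0 /\ dnu = -2 /\
     forall s, sol s -> N1 s = ones n1 /\ N2 s = ones n2) /\
  (* compact form *)
  (dnu = (if (a1 == -1) && (a2 == -1) then -2 else a1 * a2)) /\
  ((act H uH - a1 * (1 + a2)) %% 3 = 0)%Z /\
  ((act H wH - a2 * (1 + a1)) %% 3 = 0)%Z.
Proof.
move=> sg1 sg2; cbv zeta beta.
rewrite (dnuE e1 e2 u w).
have rk := rank_leq_row (Nmx (joinG e1 e2 u w)).
case: (act_cases e1 u) => [h1|[h1|h1]]; case: (act_cases e2 w) => [h2|[h2|h2]].
- have [hu [hw [hr hs]]] := casemm sg1 sg2 h1 h2.
  rewrite h1 h2 hu hw; splitn; try (by move=> /eqP); try (by move=> _ /eqP);
    try (move: hr; rewrite /=; lia).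
  + move=> _ _; split; [done|split; [done|split; [move: hr; lia|exact: hs]]].
- have [hu [hw [hr hs]]] := casem0 sg1 sg2 h1 h2.
  rewrite h1 h2 hu hw; splitn; try (by move=> /eqP); try (by move=> _ /eqP);
    try (move: hr; rewrite /=; lia).
  + move=> _ _; split; [done|split; [done|split; [move: hr; lia|exact: hs]]].
- have [hu [hw [hr hs]]] := casem1 sg1 sg2 h1 h2.
  rewrite h1 h2 hu hw; splitn; try (by move=> /eqP); try (by move=> _ /eqP);
    try (move: hr; rewrite /=; lia).
  + move=> _ _; split; [done|split; [done|split; [move: hr; lia|exact: hs]]].
- have [hu [hw [hr hs]]] := case0m sg1 sg2 h1 h2.
  rewrite h1 h2 hu hw; splitn; try (by move=> /eqP); try (by move=> _ /eqP);
    try (move: hr; rewrite /=; lia).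
  + move=> _ _; split; [done|split; [done|split; [move: hr; lia|exact: hs]]].
- have [hu [hw [hr hs]]] := case00 sg1 sg2 h1 h2.
  rewrite h1 h2 hu hw; splitn; try (by move=> /eqP); try (by move=> _ /eqP);
    try (move: hr; rewrite /=; lia).
  + move=> _ _; split; [done|split; [done|split; [move: hr; lia|exact: hs]]].
- have [hu [hw [hr hs]]] := case01 sg1 sg2 h1 h2.
  rewrite h1 h2 hu hw; splitn; try (by move=> /eqP); try (by move=> _ /eqP);
    try (move: hr; rewrite /=; lia).
  + move=> _ _; split; [done|split; [done|split; [move: hr; lia|exact: hs]]].
- have [hu [hw [hr hs]]] := case1m sg1 sg2 h1 h2.
  rewrite h1 h2 hu hw; splitn; try (by move=> /eqP); try (by move=> _ /eqP);
    try (move: hr; rewrite /=; lia).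
  + move=> _ _; split; [done|split; [done|split; [move: hr; lia|exact: hs]]].
- have [hu [hw [hr hs]]] := case10 sg1 sg2 h1 h2.
  rewrite h1 h2 hu hw; splitn; try (by move=> /eqP); try (by move=> _ /eqP);
    try (move: hr; rewrite /=; lia).
  + move=> _ _; split; [done|split; [done|split; [move: hr; lia|exact: hs]]].
- have [hu [hw [hr hs]]] := case11 sg1 sg2 h1 h2.
  rewrite h1 h2 hu hw; splitn; try (by move=> /eqP); try (by move=> _ /eqP);
    try (move: hr; rewrite /=; lia).
  + move=> _ _; split; [done|split; [done|split; [move: hr; lia|exact: hs]]].
Qed.
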